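(* Let $s \geq 1$, $\Pi \subset [s]$, and $u \in \mathbb{Z}$ with $|\Pi| > u \geq 0$, let $v \in \mathbb{Z}$, and let $\Gamma, \alpha \in \mathbb{Z}^s$. Then \[ \sum_{\substack{\sigma \in \mathfrak{S}_s \\ M \subset \Pi}} (-1)^{|M|} \operatorname{sgn}(\sigma)\, \Delta_s(\sigma \cdot^\alpha \Gamma - 1_M) \binom{v - |M| + u}{u} = 0, \] where $\binom{v - |M| + u}{u}$ denotes the polynomial $\frac{1}{u!}\prod_{i=1}^u (v - |M| + i)$.
   Context: For $\sigma \in \mathfrak{S}_s$ and $\Gamma = (\gamma_1,\ldots,\gamma_s), \alpha = (\alpha_1, \ldots, \alpha_s) \in \mathbb{Z}^s$, $\sigma \cdot^\alpha \Gamma \in \mathbb{Z}^s$ has $\ell$-th entry $\gamma_{\sigma^{-1}(\ell)} + \alpha_{\sigma^{-1}(\ell)} - \alpha_\ell$. $\Delta_s(y_1, \ldots, y_s) = \prod_{1 \leq v < w \leq s}(y_w - y_v)$. $1_M \in \{0,1\}^s$ is the indicator vector of $M \subset [s]$. *)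

(* Defs.v *)
From HB Require Import structures.
From mathcomp Require Import all_boot all_order all_algebra all_fingroup.
Set Implicit Arguments. Unset Strict Implicit. Unset Printing Implicit Defensive.
Import Order.TTheory GRing.Theory Num.Theory.
Local Open Scope ring_scope.

Definition Delta (s : nat) (y : 'I_s -> int) : int :=
  \prod_(v < s) \prod_(w < s | (v < w)%N) (y w - y v).

Definition twact (s : nat) (sigma : 'S_s) (alpha Gamma : 'I_s -> int) : 'I_s -> int :=
  fun l => Gamma ((sigma^-1)%g l) + alpha ((sigma^-1)%g l) - alpha l.

Definition ind (s : nat) (M : {set 'I_s}) : 'I_s -> int :=
  fun l => (l \in M)%:R.

Definition polybinom (x : int) (u : nat) : rat :=
  (\prod_(1 <= i < u.+1) (x%:~R + i%:R)) / (u`!)%:R.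

(* Main.v *)
Require Import Defs.
From HB Require Import structures.
From mathcomp Require Import all_boot all_order all_algebra all_fingroup.
From mathcomp Require Import ring.
Import Order.TTheory GRing.Theory Num.Theory.
Local Open Scope ring_scope.

Lemma eq_Delta n (y z : 'I_n -> int) : (forall l, y l = z l) -> Delta y = Delta z.
Proof. by move=> e; rewrite /Delta; apply eq_bigr => i _; apply eq_bigr => j _; rewrite !e. Qed.

Lemma Delta_det n (y : 'I_n -> int) :
  Delta y = \det (\matrix_(i < n, k < n) y k ^+ i).
Proof.
have -> : \matrix_(i < n, k < n) y k ^+ i = Vandermonde n (\row_k y k).
  by apply/matrixP => i j; rewrite !mxE.
rewrite det_Vandermonde /Delta; apply eq_bigr => i _; apply eq_bigr => j _.
by rewrite !mxE.
Qed.

Lemma shift_det n (b d : 'I_n -> int) :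
  \det (\matrix_(i < n, k < n) (b k - d i) ^+ i) = \det (\matrix_(i < n, k < n) b k ^+ i).
Proof.
set L := \matrix_(i < n, j < n) ((- d i) ^+ (i - j) *+ 'C(i, j)).
have -> : \matrix_(i < n, k < n) (b k - d i) ^+ i = L *m \matrix_(i < n, k < n) b k ^+ i.
  apply/matrixP => i k; rewrite !mxE addrC exprDn.
  under [RHS]eq_bigr do rewrite !mxE mulrnAl.
  rewrite -[RHS](big_mkord xpredT (fun j => ((- d i) ^+ (i - j) * b k ^+ j) *+ 'C(i, j))).
  rewrite (big_cat_nat (n := i.+1)) //= big_mkord [X in _ = _ + X]big_nat_cond.
  rewrite [X in _ = _ + X]big1 ?addr0 // => j /andP[/andP[ij _] _].
  by rewrite bin_small.
rewrite det_mulmx det_trig ?big1 ?mul1r // => [i _|]; first by rewrite mxE subnn binn.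
by apply/is_trig_mxP => i j ij; rewrite mxE bin_small.
Qed.

Lemma sum_indep n (b c : 'I_n -> int) :
  \sum_(sigma : 'S_n) (-1) ^+ odd_perm sigma * Delta (fun l => b ((sigma^-1)%g l) - c l)
  = \sum_(tau : 'S_n) \det (\matrix_(i < n, k < n) b k ^+ i).
Proof.
under eq_bigr do rewrite Delta_det /(\det _) mulr_sumr.
rewrite exchange_big /=; apply eq_bigr => tau _.
rewrite -(shift_det _ b (fun i => c (tau i))) /(\det _).
rewrite [RHS](reindex_inj (h := fun sigma : 'S_n => (tau * sigma^-1)%g)) /=; last first.
  by move=> x y /mulgI /invg_inj.
apply eq_bigr => sigma _; rewrite odd_permM odd_permV signr_addb.
have -> : \prod_i (\matrix_(i0 < n, k < n) (b k - c (tau i0)) ^+ i0) i ((tau * sigma^-1)%g i)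
   = \prod_i (\matrix_(i0 < n, k < n) (b ((sigma^-1)%g k) - c k) ^+ i0) i (tau i).
  by apply eq_bigr => i _; rewrite !mxE permM.
by rewrite mulrCA mulrA.
Qed.

Lemma pascal (x : int) (u : nat) :
  polybinom x u.+1 - polybinom (x - 1) u.+1 = polybinom x u.
Proof.
have e1 : \prod_(1 <= i < u.+2) (x%:~R + i%:R : rat)
    = (\prod_(1 <= i < u.+1) (x%:~R + i%:R)) * (x%:~R + (u.+1)%:R).
  by rewrite big_nat_recr.
have e2 : \prod_(1 <= i < u.+2) ((x - 1)%:~R + i%:R : rat)
    = x%:~R * \prod_(1 <= i < u.+1) (x%:~R + i%:R).
  rewrite big_nat_recl //; congr (_ * _); first by rewrite rmorphB /=; ring.
  by apply eq_bigr => i _; rewrite rmorphB /= -addn1 natrD; ring.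
rewrite /polybinom e1 e2.
rewrite factS natrM.
have h1 : ((u`!)%:R : rat) != 0 by rewrite pnatr_eq0 -lt0n fact_gt0.
have h2 : (u%:R + 1 : rat) != 0 by rewrite -mulrSr pnatr_eq0.
set P := \prod_(1 <= i < u.+1) _.
rewrite -addn1 natrD.
by field; rewrite h1 h2.
Qed.

Lemma split_sub (T : finType) (P : {set T}) x (F : {set T} -> rat) :
  x \in P ->
  \sum_(M : {set T} | M \subset P) F M = \sum_(M : {set T} | M \subset P :\ x) (F M + F (x |: M)).
Proof.
move=> xP; rewrite big_split /= [LHS](bigID (fun M : {set T} => x \in M)) /= addrC.
congr (_ + _).
  by apply eq_bigl => M; rewrite subsetD1.
rewrite (reindex_onto (fun M => x |: M) (fun M => M :\ x)) /=; last first.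
  by move=> M /andP[_ xM]; rewrite setD1K.
apply eq_bigl => M; rewrite subsetD1 setU11 andbT subUset sub1set xP /=.
case xM: (x \in M); last by rewrite setU1K ?xM // eqxx.
rewrite andbF; case: eqP => [E|_]; last by rewrite andbF.
by have := setD11 x (x |: M); rewrite E xM.
Qed.

Lemma fd (T : finType) (u : nat) : forall (P : {set T}) (v : int), (u < #|P|)%N ->
  \sum_(M : {set T} | M \subset P) ((-1) ^+ #|M| * polybinom (v - (#|M|)%:Z) u : rat) = 0.
Proof.
elim: u => [|u IH] P v hP.
  have /set0Pn [x xP] : P != set0 by rewrite -card_gt0.
  rewrite (split_sub _ _ _ _ xP) big1 // => M; rewrite subsetD1 => /andP[_ xM].
  rewrite cardsU1 xM /= exprS /polybinom !big_geq //; ring.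
have /set0Pn [x xP] : P != set0 by rewrite -card_gt0 (leq_ltn_trans _ hP).
have hP' : (u < #|P :\ x|)%N by move: hP; rewrite (cardsD1 x P) xP.
rewrite (split_sub _ _ _ _ xP); apply: etrans (IH (P :\ x) v hP').
apply eq_bigr => M; rewrite subsetD1 => /andP[_ xM].
rewrite cardsU1 xM /= exprS.
have -> : v - (1 + #|M|)%N%:Z = v - #|M|%:Z - 1 by rewrite PoszD; ring.
rewrite -(pascal (v - #|M|%:Z) u).
ring.
Qed.

Theorem corollary6p4 (s : nat) (Pi : {set 'I_s}) (u : nat) (v : int)
    (Gamma alpha : 'I_s -> int) :
  (1 <= s)%N -> (u < #|Pi|)%N ->
  \sum_(sigma : 'S_s) \sum_(M : {set 'I_s} | M \subset Pi)
     ((-1) ^+ #|M| * (-1) ^+ odd_perm sigma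
      * (Delta (fun l => twact sigma alpha Gamma l - ind M l))%:~R
      * polybinom (v - (#|M|)%:Z) u : rat) = 0.
Proof.
move=> _ hu.
set K : int := \sum_(tau : 'S_s) \det (\matrix_(i < s, k < s) (Gamma k + alpha k) ^+ i).
have HM : forall M : {set 'I_s}, \sum_(sigma : 'S_s)
    ((-1) ^+ odd_perm sigma * (Delta (fun l => twact sigma alpha Gamma l - ind M l))%:~R : rat)
    = K%:~R.
  move=> M; rewrite /K -(sum_indep _ (fun k => Gamma k + alpha k) (fun l => alpha l + ind M l)).
  rewrite rmorph_sum; apply eq_bigr => sigma _; rewrite rmorphM /= rmorph_sign.
  congr (_ * _%:~R); apply eq_Delta => l; rewrite /twact; ring.
rewrite exchange_big /=.
rewrite (eq_bigr (fun M : {set 'I_s} => (-1) ^+ #|M| * polybinom (v - (#|M|)%:Z) u * K%:~R)); last first.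
  move=> M _; rewrite -(HM M) mulr_sumr; apply eq_bigr => sigma _.
  by rewrite [RHS]mulrACA [in RHS](mulrC (polybinom _ _)) [RHS]mulrA.
rewrite -(mulr_suml _ _ (fun M : {set 'I_s} => (-1) ^+ #|M| * polybinom (v - (#|M|)%:Z) u)).
by rewrite (fd _ u Pi v hu) mul0r.
Qed.
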